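(* Let $\vec v_1,\dots,\vec v_l$ be $l$ distinct unit vectors in $\mathbb{R}^3$ with multiplicities $m_i\in\mathbb{N}$ sorted in descending order ($m_1\ge m_2\ge\dots\ge m_l$), such that $\sum_{i=1}^l m_i=n$ for some $n\ge3$ and $m_1<\sum_{i=2}^l m_i$. For $\alpha\in[0,1)$ let $f_\alpha$ be the map on spherical coordinates $(\theta,\phi)\in[0,\pi]\times[0,2\pi]$ given by $f_\alpha(\theta,\phi)=\big(2\arctan\big(\tfrac{1}{1-\alpha}\tan(\theta/2)\big),\phi\big)$ (so that $\theta=0$ and $\theta=\pi$ are fixed), acting on unit vectors $\vec v=(\sin\theta\cos\phi,\sin\theta\sin\phi,\cos\theta)^T$. Then there exist a rotation $O\in SO(3)$ and $\alpha\in[0,1)$ such that the vectors $\vec v_i'=f_\alpha(O\vec v_i)$ satisfy $\sum_{i=1}^l m_i\vec v_i'=\vec 0$. *)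

(* Defs.v *)
From HB Require Import structures.
From mathcomp Require Import all_boot all_order all_algebra.
From mathcomp Require Import all_classical all_reals all_analysis.
Set Implicit Arguments. Unset Strict Implicit. Unset Printing Implicit Defensive.
Import Order.TTheory GRing.Theory Num.Theory.
Local Open Scope ring_scope.

Section Defs.
Variable R : realType.

Definition unit_vec (v : 'cV[R]_3) : Prop := \sum_(k < 3) (v k 0) ^+ 2 = 1.

Definition is_SO3 (O : 'M[R]_3) : Prop := O^T *m O = 1%:M /\ \det O = 1.

Definition sph (theta phi : R) : 'cV[R]_3 :=
  \col_(k < 3) [:: sin theta * cos phi; sin theta * sin phi; cos theta]`_k.

Definition sph_coords (v : 'cV[R]_3) (theta phi : R) : Prop :=
  0 <= theta <= pi /\ 0 <= phi <= 2 * pi /\ v = sph theta phi.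

(* Action of f_alpha on the polar angle: theta |-> 2 arctan(tan(theta/2)/(1-alpha)),
   with theta = pi fixed (the limiting value; tan(pi/2) is undefined). *)
Definition f_theta (alpha theta : R) : R :=
  if theta == pi then pi else 2 * atan ((1 - alpha)^-1 * tan (theta / 2)).

Definition f_alpha (alpha theta phi : R) : 'cV[R]_3 := sph (f_theta alpha theta) phi.

End Defs.

(* Main.v *)
Require Import Defs.
From HB Require Import structures.
From mathcomp Require Import all_boot all_order all_algebra.
From mathcomp Require Import all_classical all_reals all_analysis.
From mathcomp Require Import ring lra zify.
Import Order.TTheory GRing.Theory Num.Theory.
Import numFieldTopology.Exports numFieldNormedType.Exports.
Local Open Scope ring_scope.
Local Open Scope classical_set_scope.

Section S.
Variable R : realType.

Lemma cont_sum {T : topologicalType} (l : nat) (F : 'I_l -> T -> R) (p : T) :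
  (forall i, {for p, continuous (F i)}) ->
  {for p, continuous (fun q => \sum_(i < l) F i q)}.
Proof.
move=> h; apply: cvg_big => //.
exact: add_continuous.
by move=> i _; exact: h.
Qed.

Lemma cont_ln {T : topologicalType} (f : T -> R) (p : T) :
  {for p, continuous f} -> 0 < f p -> {for p, continuous (fun q => ln (f q))}.
Proof.
move=> hf hp. apply: continuous_comp => //. exact: continuous_ln.
Qed.

Lemma cont_sq {T : topologicalType} (f : T -> R) (p : T) :
  {for p, continuous f} -> {for p, continuous (fun q => f q ^+ 2)}.
Proof.
move=> hf. apply: (@continuous_comp _ _ _ f (fun x : R => x ^+ 2)) => //. exact: exprn_continuous.
Qed.

Lemma cont_B {T : topologicalType} (f g : T -> R) (p : T) :
  {for p, continuous f} -> {for p, continuous g} -> {for p, continuous (fun q => f q - g q)}.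
Proof. move=> hf hg; exact: continuousB. Qed.

Lemma cont_D {T : topologicalType} (f g : T -> R) (p : T) :
  {for p, continuous f} -> {for p, continuous g} -> {for p, continuous (fun q => f q + g q)}.
Proof. move=> hf hg; exact: continuousD. Qed.

Lemma cont_M {T : topologicalType} (f g : T -> R) (p : T) :
  {for p, continuous f} -> {for p, continuous g} -> {for p, continuous (fun q => f q * g q)}.
Proof. move=> hf hg; exact: continuousM. Qed.

Lemma cont_c {T : topologicalType} (k : R) (p : T) :
  {for p, continuous (fun q => k)}.
Proof. exact: cvg_cst. Qed.

Lemma cont_coord (p : 'rV[R]_3) (i : 'I_3) :
  {for p, continuous (fun q : 'rV[R]_3 => q ord0 i)}.
Proof. exact: coord_continuous. Qed.



Lemma is_derive_lncomp (f : R -> R) (x df : R) :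
  is_derive x 1 f df -> 0 < f x -> is_derive x 1 (fun t => ln (f t)) (df / f x).
Proof.
move=> hf fx0.
have dln : derivable (@ln R) (f x) 1 by apply: ex_derive; exact: is_derive1_ln.
have dc : derivable ((@ln R) \o f) x 1.
  apply/derivable1_diffP; apply: differentiable_comp.
    by apply/derivable1_diffP; exact: ex_derive.
  by apply/derivable1_diffP.
apply: DeriveDef; first exact: dc.
rewrite -derive1E /= derive1_comp //.
rewrite !derive1E (@derive_val _ _ _ _ _ _ _ hf).
have [_ ->] := is_derive1_ln fx0.
by rewrite mulrC.
Qed.

Lemma is_derive_quad (A B C x : R) :
  is_derive x 1 (fun t => A + B * t + C * t ^+ 2) (B + 2 * C * x).
Proof.
apply: is_derive_eq.
rewrite /GRing.scale /=. ring.
Qed.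

Lemma is_derive_scal (k : R) (f : R -> R) (x df : R) :
  is_derive x 1 f df -> is_derive x 1 (fun s => k * f s) (k * df).
Proof. move=> hf; have := is_deriveZ k hf; exact. Qed.

Lemma is_derive_sumf (l : nat) (h : 'I_l -> R -> R) (x : R) (dh : 'I_l -> R) :
  (forall i, is_derive x 1 (h i) (dh i)) ->
  is_derive x 1 (fun s => \sum_(i < l) h i s) (\sum_(i < l) dh i).
Proof.
move=> hh; have := is_derive_sum hh.
suff -> : (\sum_(i < l) h i) = (fun s => \sum_(i < l) h i s) by [].
by apply/funext => s; rewrite fct_sumE.
Qed.

Lemma is_derive_subf (f g : R -> R) (x df dg : R) :
  is_derive x 1 f df -> is_derive x 1 g dg -> is_derive x 1 (fun s => f s - g s) (df - dg).
Proof. move=> hf hg; have := is_deriveB hf hg; exact. Qed.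

End S.

Definition o0 : 'I_3 := @Ordinal 3 0 isT.
Definition o1 : 'I_3 := @Ordinal 3 1 isT.
Definition o2 : 'I_3 := @Ordinal 3 2 isT.

Lemma ord3P (P : 'I_3 -> Prop) : P o0 -> P o1 -> P o2 -> forall i, P i.
Proof.
move=> h0 h1 h2 [[|[|[|k]]] hk].
- by rewrite (_ : Ordinal hk = o0) //; apply/val_inj.
- by rewrite (_ : Ordinal hk = o1) //; apply/val_inj.
- by rewrite (_ : Ordinal hk = o2) //; apply/val_inj.
- by [].
Qed.

Section Crit.
Variable R : realType.
Variable l : nat.
Variables (X Y Z : 'I_l -> R) (m : 'I_l -> nat) (n : nat) (i0 : 'I_l).
Hypothesis hu : forall i, X i ^+ 2 + Y i ^+ 2 + Z i ^+ 2 = 1.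
Hypothesis hd : forall i j, i != j -> 0 < (X i - X j)^+2 + (Y i - Y j)^+2 + (Z i - Z j)^+2.
Hypothesis hsum : (\sum_(i < l) m i)%N = n.
Hypothesis hmax : forall i, (2 * m i < n)%N.

Definition Nc (a b c : R) := a^+2 + b^+2 + c^+2.
Definition Dc i (a b c : R) := (X i - a)^+2 + (Y i - b)^+2 + (Z i - c)^+2.
Definition Phi a b c := \sum_(i < l) (m i)%:R * ln (Dc i a b c) - n%:R * ln (1 - Nc a b c).

Lemma CS i a b c : (X i * a + Y i * b + Z i * c) ^+ 2 <= Nc a b c.
Proof.
have -> : Nc a b c = (X i ^+ 2 + Y i ^+ 2 + Z i ^+ 2) * Nc a b c by rewrite hu mul1r.
rewrite -subr_ge0.
have -> : (X i ^+ 2 + Y i ^+ 2 + Z i ^+ 2) * Nc a b c - (X i * a + Y i * b + Z i * c) ^+ 2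
  = (X i * b - Y i * a)^+2 + (X i * c - Z i * a)^+2 + (Y i * c - Z i * b)^+2.
  rewrite /Nc; ring.
by rewrite !addr_ge0 ?sqr_ge0.
Qed.

Lemma Dc_expand i a b c : Dc i a b c = 1 - 2 * (X i * a + Y i * b + Z i * c) + Nc a b c.
Proof.
transitivity (X i ^+ 2 + Y i ^+ 2 + Z i ^+ 2 - 2 * (X i * a + Y i * b + Z i * c) + Nc a b c).
  rewrite /Dc /Nc; ring.
by rewrite hu.
Qed.

Lemma Dc_pos i a b c : Nc a b c < 1 -> 0 < Dc i a b c.
Proof.
move=> hN; have hc := CS i a b c; rewrite Dc_expand.
set s := X i * a + Y i * b + Z i * c in hc *; set N := Nc a b c in hN hc *.
have N0 : 0 <= N by rewrite /N /Nc !addr_ge0 ?sqr_ge0.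
nra.
Qed.

Lemma Dc_ge i a b c r : 0 <= r -> Nc a b c = r ^+ 2 -> (1 - r) ^+ 2 <= Dc i a b c.
Proof.
move=> r0 hN; have hc := CS i a b c; rewrite Dc_expand hN.
set s := X i * a + Y i * b + Z i * c in hc *; rewrite hN in hc.
nra.
Qed.


Definition dist2 i j := (X i - X j)^+2 + (Y i - Y j)^+2 + (Z i - Z j)^+2.

Definition delta : R :=
  \big[Order.min/1]_(ij : 'I_l * 'I_l | ij.1 != ij.2) (dist2 ij.1 ij.2 / 4).

Lemma delta_gt0 : 0 < delta.
Proof.
rewrite /delta; elim/big_ind: _ => //.
  by move=> x y hx hy; rewrite lt_min hx hy.
move=> [i j] /= hij; apply: divr_gt0 => //; exact: hd.
Qed.

Lemma delta_le1 : delta <= 1.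
Proof. exact: bigmin_le_id. Qed.

Lemma delta_le i j : i != j -> 4 * delta <= dist2 i j.
Proof.
move=> hij.
have := @bigmin_le_cond _ _ _ 1 (i, j) (fun ij : 'I_l * 'I_l => ij.1 != ij.2)
  (fun ij => dist2 ij.1 ij.2 / 4) hij.
rewrite -/delta /= => h.
have := h; rewrite ler_pdivlMr //; lra.
Qed.

Lemma dist2_le i j a b c : dist2 i j <= 2 * Dc i a b c + 2 * Dc j a b c.
Proof.
rewrite -subr_ge0.
have -> : 2 * Dc i a b c + 2 * Dc j a b c - dist2 i j =
  (X i - a + (X j - a))^+2 + (Y i - b + (Y j - b))^+2 + (Z i - c + (Z j - c))^+2.
  rewrite /Dc /dist2; ring.
by rewrite !addr_ge0 ?sqr_ge0.
Qed.

Lemma close_unique i j a b c : i != j -> Dc i a b c < delta -> delta <= Dc j a b c.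
Proof.
move=> hij hi; rewrite leNgt; apply/negP => hj.
have := @delta_le i j hij; have := dist2_le i j a b c. lra.
Qed.

Definition rr : R := 1 - (delta / 2) ^+ n / 2.

Lemma rr_facts : 0 < 1 - rr /\ 1 - rr <= 1 / 2 /\ ln (1 - rr) = n%:R * (ln delta - ln 2) - ln 2.
Proof.
have d0 := delta_gt0; have d1 := delta_le1.
have hq0 : 0 < (delta / 2) ^+ n by apply: exprn_gt0; lra.
have hq1 : (delta / 2) ^+ n <= 1 by apply: exprn_ile1; lra.
have -> : 1 - rr = (delta / 2) ^+ n / 2 by rewrite /rr; ring.
split; first lra.
split; first lra.
rewrite ln_div ?posrE //.
rewrite lnXn; last lra.
rewrite ln_div ?posrE //.
by rewrite mulr_natl.
Qed.

Lemma bnd a b c : Nc a b c = rr ^+ 2 -> ln 2 <= Phi a b c.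
Proof.
move=> hN.
have [r0 [r1 hL]] := rr_facts.
set L := ln (1 - rr) in hL *.
have d0 := delta_gt0; have d1 := delta_le1.
have hN1 : Nc a b c < 1 by rewrite hN; nra.
have hD i : 0 < Dc i a b c by exact: Dc_pos.
have [j hj] : exists j, forall i, i != j -> delta <= Dc i a b c.
  case: (pselect (exists j, Dc j a b c < delta)) => [[j hj]|hno].
    by exists j => i hij; apply: (@close_unique j i) => //; rewrite eq_sym.
  exists i0 => i _; rewrite leNgt; apply/negP => h; apply: hno; by exists i.
rewrite /Phi (bigD1 j) //=.
have h1 : 2 * L <= ln (Dc j a b c).
  have -> : 2 * L = ln ((1 - rr) ^+ 2) by rewrite lnXn // mulr_natl.
  rewrite ler_ln ?posrE //; last by apply: exprn_gt0.
  apply: Dc_ge => //; lra.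
have h2 : \sum_(i < l | i != j) (m i)%:R * ln delta <= \sum_(i < l | i != j) (m i)%:R * ln (Dc i a b c).
  apply: ler_sum => i hij; apply: ler_wpM2l => //.
  by rewrite ler_ln ?posrE //; apply: hj.
have h3 : \sum_(i < l | i != j) (m i)%:R * ln delta = (n%:R - (m j)%:R) * ln delta.
  rewrite -big_distrl /=; congr (_ * _).
  rewrite -hsum natr_sum [in RHS](bigD1 j) //=; ring.
have hrr : 1 - Nc a b c = (1 - rr) * (1 + rr) by rewrite hN; ring.
have h4 : ln (1 - Nc a b c) = L + ln (1 + rr) by rewrite hrr lnM // posrE; lra.
have h5 : ln (1 + rr) <= ln 2 by rewrite ler_ln ?posrE; lra.
have h6 : ln delta <= 0 by apply: ln_le0.
have h7 : L < 0 by apply: ln_lt0; lra.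
have hmj : 2 * (m j)%:R + 1 <= n%:R :> R.
  have : ((2 * m j).+1 <= n)%N by exact: hmax.
  by rewrite -(ler_nat R) -addn1 natrD natrM.
have hp1 : 0 <= (n%:R - 2 * (m j)%:R - 1) * (- L) by apply: mulr_ge0; lra.
have hp2 : 0 <= (m j)%:R * (- ln delta) by apply: mulr_ge0 => //; lra.
have hp3 : (m j)%:R * (2 * L) <= (m j)%:R * ln (Dc j a b c) by apply: ler_wpM2l.
have hp4 : n%:R * ln (1 + rr) <= n%:R * ln 2 by apply: ler_wpM2l.
rewrite h4.
move: h2; rewrite h3 => h2.
nra.
Qed.

Definition Bc i (a b c d0 d1 d2 : R) := - 2 * ((X i - a) * d0 + (Y i - b) * d1 + (Z i - c) * d2).

Lemma Phi_line_derive a b c d0 d1 d2 t :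
  Nc (a + t * d0) (b + t * d1) (c + t * d2) < 1 ->
  is_derive t 1 (fun s => Phi (a + s * d0) (b + s * d1) (c + s * d2))
    (\sum_(i < l) (m i)%:R * ((Bc i a b c d0 d1 d2 + 2 * Nc d0 d1 d2 * t) /
          Dc i (a + t * d0) (b + t * d1) (c + t * d2))
     - n%:R * ((- 2 * (a * d0 + b * d1 + c * d2) + 2 * (- Nc d0 d1 d2) * t) /
          (1 - Nc (a + t * d0) (b + t * d1) (c + t * d2)))).
Proof.
move=> hN.
have eqD i s : Dc i (a + s * d0) (b + s * d1) (c + s * d2) =
   Dc i a b c + Bc i a b c d0 d1 d2 * s + Nc d0 d1 d2 * s ^+ 2.
  by rewrite /Dc /Bc /Nc; ring.
have eqN s : 1 - Nc (a + s * d0) (b + s * d1) (c + s * d2) =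
   (1 - Nc a b c) + (- 2 * (a * d0 + b * d1 + c * d2)) * s + (- Nc d0 d1 d2) * s ^+ 2.
  by rewrite /Nc; ring.
apply: is_derive_subf.
  apply: is_derive_sumf => i; apply: is_derive_scal.
  rewrite eqD; under [X in is_derive _ _ X]eq_fun do rewrite eqD.
  apply: is_derive_lncomp; first exact: is_derive_quad.
  by rewrite -eqD; apply: Dc_pos.
apply: is_derive_scal.
rewrite eqN; under [X in is_derive _ _ X]eq_fun do rewrite eqN.
apply: is_derive_lncomp; first exact: is_derive_quad.
by rewrite -eqN subr_gt0.
Qed.

Definition Nr (p : 'rV[R]_3) := Nc (p ord0 o0) (p ord0 o1) (p ord0 o2).
Definition Phir (p : 'rV[R]_3) := Phi (p ord0 o0) (p ord0 o1) (p ord0 o2).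
Definition K := [set p : 'rV[R]_3 | Nr p <= rr ^+ 2].

Lemma rr_bounds : 1 / 2 <= rr /\ rr < 1.
Proof. have [h1 [h2 _]] := rr_facts; split; lra. Qed.

Lemma Nr_cont p : {for p, continuous Nr}.
Proof.
rewrite /Nr /Nc.
apply: cont_D; first apply: cont_D.
- by apply: cont_sq; apply: cont_coord.
- by apply: cont_sq; apply: cont_coord.
- by apply: cont_sq; apply: cont_coord.
Qed.

Lemma Phir_cont p : Nr p < 1 -> {for p, continuous Phir}.
Proof.
move=> hp; rewrite /Phir /Phi.
apply: cont_B.
  apply: cont_sum => i; apply: cont_M; first exact: cont_c.
  apply: cont_ln; last exact: Dc_pos.
  rewrite /Dc; apply: cont_D; first apply: cont_D.
  - by apply: cont_sq; apply: cont_B; [exact: cont_c| exact: cont_coord].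
  - by apply: cont_sq; apply: cont_B; [exact: cont_c| exact: cont_coord].
  - by apply: cont_sq; apply: cont_B; [exact: cont_c| exact: cont_coord].
apply: cont_M; first exact: cont_c.
apply: cont_ln; last by rewrite subr_gt0.
apply: cont_B; first exact: cont_c.
exact: Nr_cont.
Qed.

Lemma K_compact : compact K.
Proof.
apply: (@subclosed_compact _ _ [set v : 'rV[R]_3 | forall i, `[(-1 : R), 1]%classic (v ord0 i)]).
- rewrite (_ : K = Nr @^-1` [set x | x <= rr ^+ 2]) //.
  apply: preimage_closed; last exact: closed_le.
  by move=> p _; apply: Nr_cont.
- apply: (@rV_compact _ _ (fun _ => `[(-1 : R), 1]%classic)) => _.
  exact: segment_compact.
- move=> p; rewrite /K /Nr /Nc /= => hp.
  have [h1 h2] := rr_bounds.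
  have hr : rr ^+ 2 <= 1 by nra.
  apply: ord3P; rewrite /= in_itv /=; apply/andP.
  + have := sqr_ge0 (p ord0 o1); have := sqr_ge0 (p ord0 o2); split; nra.
  + have := sqr_ge0 (p ord0 o0); have := sqr_ge0 (p ord0 o2); split; nra.
  + have := sqr_ge0 (p ord0 o1); have := sqr_ge0 (p ord0 o0); split; nra.
Qed.

Lemma Phi0 : Phi 0 0 0 = 0.
Proof.
rewrite /Phi /Nc /Dc expr0n /= !addr0 subr0 ln1 mulr0 subr0.
by apply: big1 => i _; rewrite !subr0 hu ln1 mulr0.
Qed.

Lemma exists_min : exists p, Nr p < rr ^+ 2 /\ forall q, K q -> Phir p <= Phir q.
Proof.
have [h1 h2] := rr_bounds.
have hr : rr ^+ 2 < 1 by nra.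
have K0 : K 0.
  rewrite /K /Nr /Nc /= !mxE expr0n /= !addr0; nra.
have cK : {within K, continuous Phir}.
  apply: continuous_in_subspaceT => p; rewrite inE => hp.
  apply: Phir_cont; exact: (le_lt_trans hp hr).
have [p pK hmin] := @compact_EVT_min _ _ Phir K (ex_intro _ 0 K0) K_compact cK.
exists p; split; last by move=> q hq; apply: hmin; rewrite inE.
rewrite inE /K /= in pK.
rewrite lt_neqAle pK andbT; apply/negP => /eqP hpe.
have := @bnd (p ord0 o0) (p ord0 o1) (p ord0 o2) hpe; rewrite -/(Phir p) => hb.
have : Phir p <= Phir 0 by apply: hmin; rewrite inE.
rewrite /Phir !mxE Phi0 => hle.
have : (0 : R) < ln 2 by apply: ln_gt0; lra.
rewrite /Phir in hb; lra.
Qed.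

Lemma crit : exists a b c, Nc a b c < 1 /\ forall d0 d1 d2,
  \sum_(i < l) (m i)%:R * ((X i - a) * d0 + (Y i - b) * d1 + (Z i - c) * d2) / Dc i a b c
  = n%:R * (a * d0 + b * d1 + c * d2) / (1 - Nc a b c).
Proof.
have [h1 h2] := rr_bounds.
have hr : rr ^+ 2 < 1 by nra.
have [p [hp hmin]] := exists_min.
set a := p ord0 o0; set b := p ord0 o1; set c := p ord0 o2.
have hN : Nc a b c < rr ^+ 2 by [].
exists a, b, c; split; first exact: lt_trans hN hr.
move=> d0 d1 d2.
set g := fun s => Phi (a + s * d0) (b + s * d1) (c + s * d2).
set pd := a * d0 + b * d1 + c * d2.
set dd := Nc d0 d1 d2.
have dd0 : 0 <= dd by rewrite /dd /Nc !addr_ge0 ?sqr_ge0.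
have den0 : 0 < 2 * `|pd| + dd + 1 by have := normr_ge0 pd; lra.
set eps := (rr ^+ 2 - Nc a b c) / (2 * `|pd| + dd + 1).
have eps0 : 0 < eps by apply: divr_gt0 => //; lra.
have eps1 : eps <= 1.
  rewrite ler_pdivrMr //; have := normr_ge0 pd.
  have : 0 <= Nc a b c by rewrite /Nc !addr_ge0 ?sqr_ge0.
  nra.
have inK : forall s, `|s| < eps -> Nc (a + s * d0) (b + s * d1) (c + s * d2) <= rr ^+ 2.
  move=> s hs.
  have -> : Nc (a + s * d0) (b + s * d1) (c + s * d2) = Nc a b c + 2 * s * pd + s ^+ 2 * dd.
    by rewrite /Nc /pd /dd /Nc; ring.
  have hs' : `|s| * (2 * `|pd| + dd + 1) < rr ^+ 2 - Nc a b c by rewrite -ltr_pdivlMr.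
  have hs1 : `|s| <= 1 by lra.
  have hsq : s ^+ 2 <= `|s| by rewrite -(real_normK (num_real s)); have := normr_ge0 s; nra.
  have hspd : s * pd <= `|s| * `|pd| by rewrite -normrM ler_norm.
  have hsdd : s ^+ 2 * dd <= `|s| * dd by apply: ler_wpM2r.
  have := normr_ge0 s; nra.
have Kt : forall s, `|s| < eps -> g 0 <= g s.
  move=> s hs.
  have := hmin (\row_(k < 3) [:: a + s * d0; b + s * d1; c + s * d2]`_k).
  rewrite /K /Nr /Phir /g /= => hh.
  have e0 : (\row_(k < 3) [:: a + s * d0; b + s * d1; c + s * d2]`_k) ord0 o0 = a + s * d0 by rewrite mxE.
  have e1 : (\row_(k < 3) [:: a + s * d0; b + s * d1; c + s * d2]`_k) ord0 o1 = b + s * d1 by rewrite mxE.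
  have e2 : (\row_(k < 3) [:: a + s * d0; b + s * d1; c + s * d2]`_k) ord0 o2 = c + s * d2 by rewrite mxE.
  rewrite !mul0r !addr0.
  move: hh; rewrite e0 e1 e2; apply; exact: inK.
have der : forall s, `|s| < eps -> derivable g s 1.
  move=> s hs; apply: ex_derive; apply: Phi_line_derive.
  exact: le_lt_trans (inK _ hs) hr.
have hF : is_derive (0:R) (1:R) g (0:R).
  apply: (@derive1_at_min _ g (- eps) eps 0).
  - lra.
  - move=> t; rewrite in_itv /= => /andP [ha hb]; apply: der.
    by rewrite ltr_norml; apply/andP; split.
  - by rewrite in_itv /=; apply/andP; split; lra.
  - move=> t; rewrite in_itv /= => /andP [ha hb]; apply: Kt.
    by rewrite ltr_norml; apply/andP; split.
have hN0 : Nc (a + 0 * d0) (b + 0 * d1) (c + 0 * d2) < 1.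
  by rewrite !mul0r !addr0; exact: lt_trans hN hr.
have hV := @Phi_line_derive a b c d0 d1 d2 0 hN0.
have e := @derive_val _ _ _ _ _ _ _ hF.
rewrite (@derive_val _ _ _ _ _ _ _ hV) in e.
rewrite !mul0r !mulr0 !addr0 in e.
have eS : \sum_(i < l) (m i)%:R * ((Bc i a b c d0 d1 d2 + 0) / Dc i a b c) =
   -2 * \sum_(i < l) (m i)%:R * ((X i - a) * d0 + (Y i - b) * d1 + (Z i - c) * d2) / Dc i a b c.
  rewrite mulr_sumr; apply: eq_bigr => i _; rewrite /Bc; ring.
rewrite eS -/pd in e.
have hN1 : 1 - Nc a b c != 0 by apply: lt0r_neq0; rewrite subr_gt0; exact: lt_trans hN hr.
set S := \sum_(i < l) _ in e *.
move: e; set Q := 1 - Nc a b c in hN1 *.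
move=> e.
have : n%:R * (-2 * pd / Q) = -2 * (n%:R * pd * Q^-1) by ring.
lra.
Qed.

End Crit.

Section Trig.
Variable R : realType.

Lemma sph_exists (x y z : R) : x ^+ 2 + y ^+ 2 + z ^+ 2 = 1 ->
  exists th ph : R, (0 <= th <= pi) /\ (0 <= ph <= 2 * pi) /\
    sin th * cos ph = x /\ sin th * sin ph = y /\ cos th = z.
Proof.
move=> h.
have hz : -1 <= z <= 1.
  have := sqr_ge0 x; have := sqr_ge0 y; move=> ? ?; apply/andP; split; nra.
have hz' : z \in `[(-1), 1]%R by rewrite in_itv /=.
set th := acos z.
have cth : cos th = z by rewrite /th acosK.
have sth : sin th = Num.sqrt (1 - z ^+ 2) by rewrite /th sin_acos.
have th0 : 0 <= th <= pi by apply/andP; split; [apply: acos_ge0 | apply: acos_lepi].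
set rho := Num.sqrt (1 - z ^+ 2) in sth.
have rho0 : 0 <= rho by apply: sqrtr_ge0.
have rho2 : rho ^+ 2 = x ^+ 2 + y ^+ 2 by rewrite /rho sqr_sqrtr; nra.
have pi0 : 0 <= (pi : R) by apply: ltW; exact: pi_gt0.
have [r0|rpos] := eqVneq rho 0.
  have hxy : x ^+ 2 + y ^+ 2 = 0 by rewrite -rho2 r0 expr0n.
  have hx : x = 0 by apply/eqP; rewrite -sqrf_eq0; apply/eqP; have := sqr_ge0 y; have := sqr_ge0 x; lra.
  have hy : y = 0 by apply/eqP; rewrite -sqrf_eq0; apply/eqP; have := sqr_ge0 y; have := sqr_ge0 x; lra.
  exists th, 0; split => //; split; first by apply/andP; split; nra.
  by rewrite sth r0 !mul0r hx hy.
have rp : 0 < rho by rewrite lt_def rpos rho0.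
set t := x / rho.
have ht : -1 <= t <= 1.
  have : t ^+ 2 <= 1.
    rewrite /t expr_div_n ler_pdivrMr; last by apply: exprn_gt0.
    have := sqr_ge0 y; lra.
  move=> ht2; apply/andP; split; nra.
have ht' : t \in `[(-1), 1]%R by rewrite in_itv /=.
set p0 := acos t.
have cp0 : cos p0 = t by rewrite /p0 acosK.
have sp0 : sin p0 = `|y| / rho.
  rewrite /p0 sin_acos //.
  have -> : 1 - t ^+ 2 = (y / rho) ^+ 2.
    rewrite /t !expr_div_n (_ : y ^+ 2 = rho ^+ 2 - x ^+ 2); last lra.
    by field; exact: rpos.
  by rewrite sqrtr_sqr normrM normfV (gtr0_norm rp).
have p00 : 0 <= p0 <= pi by apply/andP; split; [apply: acos_ge0 | apply: acos_lepi].
have [y0|yn] := leP 0 y.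
  exists th, p0; split => //; split; first by apply/andP; split; nra.
  rewrite sth cp0 sp0 (ger0_norm y0) /t; split; last split => //; field; exact: rpos.
exists th, (pi *+ 2 - p0); split => //; split.
  by apply/andP; split; rewrite mulr2n; nra.
rewrite cosB sinB cos2pi sin2pi sth cp0 sp0 (ltr0_norm yn) /t.
split; last split => //; field; exact: rpos.
Qed.

Lemma f_formula (c th : R) : 0 <= c < 1 -> 0 <= th <= pi ->
  let th' := (if th == pi then pi else 2 * atan ((1 - 2 * c / (1 + c))^-1 * tan (th / 2))) in
  sin th' = (1 - c ^+ 2) * sin th / (1 + c ^+ 2 - 2 * c * cos th) /\
  cos th' = ((1 + c ^+ 2) * cos th - 2 * c) / (1 + c ^+ 2 - 2 * c * cos th).
Proof.
move=> /andP [c0 c1] /andP [t0 t1] th'.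
have [thpi|thpi] := eqVneq th pi.
  rewrite /th' thpi eqxx sinpi cospi mulr0 mul0r; split => //.
  have h : 1 + c ^+ 2 - 2 * c * -1 != 0 by rewrite lt0r_neq0 //; nra.
  by field.
rewrite /th' (negbTE thpi).
have tlt : th < pi by rewrite lt_neqAle thpi.
have hl : (1 - 2 * c / (1 + c))^-1 = (1 + c) / (1 - c).
  by field; apply/andP; split; rewrite lt0r_neq0 //; lra.
rewrite hl.
set s := sin (th / 2); set k := cos (th / 2).
have pi0 : 0 < (pi : R) := @pi_gt0 R.
have k0 : 0 < k by apply: cos_gt0_pihalf; apply/andP; split; lra.
have hsk : s ^+ 2 + k ^+ 2 = 1 by rewrite addrC cos2Dsin2.
have hsth : sin th = 2 * s * k.
  by rewrite {1}(splitr th) sinD /s /k; ring.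
have hcth : cos th = k ^+ 2 - s ^+ 2.
  by rewrite {1}(splitr th) cosD /s /k; ring.
have htan : tan (th / 2) = s / k by [].
rewrite htan.
set T := (1 + c) / (1 - c) * (s / k).
set A := atan T.
have cA : cos A = (Num.sqrt (1 + T ^+ 2))^-1 by rewrite cos_atan.
have sq0 : 0 < Num.sqrt (1 + T ^+ 2) by rewrite sqrtr_gt0; have := sqr_ge0 T; lra.
have cA0 : cos A != 0 by rewrite cA invr_neq0 // lt0r_neq0.
have sA : sin A = T * cos A.
  have := atanK T; rewrite -/A /tan => e.
  by rewrite -{1}e mulfVK.
have cA2 : cos A ^+ 2 = (1 + T ^+ 2)^-1.
  by rewrite cA exprVn sqr_sqrtr //; have := sqr_ge0 T; lra.
have e2 : 2 * A = A + A by ring.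
rewrite e2 sinD cosD sA.
have E1 : 1 + c ^+ 2 - 2 * c * cos th = k ^+ 2 * (1 - c) ^+ 2 + s ^+ 2 * (1 + c) ^+ 2.
  rewrite hcth; transitivity ((s ^+ 2 + k ^+ 2) * (1 + c ^+ 2) - 2 * c * (k ^+ 2 - s ^+ 2)).
    by rewrite hsk; ring.
  ring.
have E2 : (1 + c ^+ 2) * cos th - 2 * c = k ^+ 2 * (1 - c) ^+ 2 - s ^+ 2 * (1 + c) ^+ 2.
  rewrite hcth; transitivity ((1 + c ^+ 2) * (k ^+ 2 - s ^+ 2) - 2 * c * (s ^+ 2 + k ^+ 2)).
    by rewrite hsk; ring.
  ring.
rewrite E1 E2 hsth.
have cn : 1 - c != 0 by rewrite lt0r_neq0 //; lra.
have kn : k != 0 by rewrite lt0r_neq0.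
have Tn : 1 + T ^+ 2 != 0 by rewrite lt0r_neq0 //; have := sqr_ge0 T; lra.
have En : k ^+ 2 * (1 - c) ^+ 2 + s ^+ 2 * (1 + c) ^+ 2 != 0.
  rewrite lt0r_neq0 //; have := sqr_ge0 s; have : 0 < k ^+ 2 * (1 - c) ^+ 2.
    by apply: mulr_gt0; apply: exprn_gt0; lra.
  nra.
split.
  have -> : T * cos A * cos A + cos A * (T * cos A) = 2 * T * cos A ^+ 2 by ring.
  rewrite cA2 /T; field.
  by rewrite !exprMn kn cn En.
have -> : cos A * cos A - T * cos A * (T * cos A) = (1 - T ^+ 2) * cos A ^+ 2 by ring.
rewrite cA2 /T; field.
by rewrite !exprMn kn cn En.
Qed.

End Trig.

Section Frame.
Variable R : realType.

Lemma sum3 (F : 'I_3 -> R) : \sum_(j < 3) F j = F o0 + F o1 + F o2.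
Proof.
rewrite !big_ord_recr big_ord0 /= add0r.
by congr (F _ + F _ + F _); apply/val_inj.
Qed.

Lemma orth_fix (O : 'M[R]_3) : O *m O^T = 1%:M ->
  exists O' : 'M[R]_3, is_SO3 O' /\ forall j, O' o2 j = O o2 j.
Proof.
move=> hO.
have hd : \det O ^+ 2 = 1.
  by rewrite expr2 -{2}det_tr -det_mulmx hO det1.
have := hd; move/eqP; rewrite sqrf_eq1 => /orP [/eqP h1|/eqP h1].
  exists O; split => //; split => //.
  exact: mulmx1C.
pose D : 'M[R]_3 := \matrix_(i, j) (if i == j then (if i == o0 then -1 else 1) else 0).
have DD : D^T *m D = 1%:M.
  apply/matrixP => i j; rewrite !mxE sum3 !mxE.
  by move: i j; apply: ord3P; apply: ord3P; rewrite /= ?mulr0 ?mul0r ?addr0 ?add0r ?mulr1 ?mulrNN ?mulr1.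
have detD : \det D = -1.
  rewrite (_ : D = diag_mx (\row_i (if i == o0 then -1 else 1))); last first.
    by apply/matrixP => i j; rewrite !mxE; case: (i == j).
  rewrite det_diag !big_ord_recr big_ord0 /= !mxE /=.
  by rewrite !mul1r !mulr1.
exists (D *m O); split; last first.
  move=> j; rewrite mxE sum3 !mxE /=. by rewrite !mul0r mul1r !add0r.
split; last by rewrite det_mulmx detD h1 mulrNN mulr1.
rewrite trmx_mul mulmxA -(mulmxA O^T) DD mulmx1.
exact: mulmx1C.
Qed.
Lemma hh_entry (a b d q S X : R) : X = d - 2 * a * b / q + a * b * S / q ^+ 2 ->
  S = 2 * q -> q != 0 -> X = d.
Proof. by move=> -> -> qn; field. Qed.

Lemma frame (u0 u1 u2 : R) : u0 ^+ 2 + u1 ^+ 2 + u2 ^+ 2 = 1 ->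
  exists O : 'M[R]_3, is_SO3 O /\ O o2 o0 = u0 /\ O o2 o1 = u1 /\ O o2 o2 = u2.
Proof.
move=> hu.
have [e1|ne1] := eqVneq u2 1.
  have h0 : u0 ^+ 2 + u1 ^+ 2 = 0 by rewrite e1 expr1n in hu; lra.
  have hx : u0 = 0 by apply/eqP; rewrite -sqrf_eq0; apply/eqP; have := sqr_ge0 u0; have := sqr_ge0 u1; lra.
  have hy : u1 = 0 by apply/eqP; rewrite -sqrf_eq0; apply/eqP; have := sqr_ge0 u0; have := sqr_ge0 u1; lra.
  exists 1%:M; split; first by split; [rewrite trmx1 mul1mx | exact: det1].
  by rewrite !mxE /= hx hy e1.
set q := 1 - u2.
have qn : q != 0 by rewrite /q subr_eq0 eq_sym.
set w := [:: u0; u1; u2 - 1].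
pose H : 'M[R]_3 := \matrix_(i, j) ((i == j)%:R - w`_i * w`_j / q).
have hw : u0 ^+ 2 + u1 ^+ 2 + (u2 - 1) ^+ 2 = 2 * q.
  by rewrite /q; transitivity (u0 ^+ 2 + u1 ^+ 2 + u2 ^+ 2 - 2 * u2 + 1); [ring | rewrite hu; ring].
have HH : H *m H^T = 1%:M.
  apply/matrixP => i j; rewrite !mxE sum3 !mxE.
  move: i j; apply: ord3P; apply: ord3P; rewrite /=.
  - by apply: (@hh_entry u0 u0 _ _ _ _ _ hw qn); field.
  - by apply: (@hh_entry u1 u0 _ _ _ _ _ hw qn); field.
  - by apply: (@hh_entry (u2 - 1) u0 _ _ _ _ _ hw qn); field.
  - by apply: (@hh_entry u0 u1 _ _ _ _ _ hw qn); field.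
  - by apply: (@hh_entry u1 u1 _ _ _ _ _ hw qn); field.
  - by apply: (@hh_entry (u2 - 1) u1 _ _ _ _ _ hw qn); field.
  - by apply: (@hh_entry u0 (u2 - 1) _ _ _ _ _ hw qn); field.
  - by apply: (@hh_entry u1 (u2 - 1) _ _ _ _ _ hw qn); field.
  - by apply: (@hh_entry (u2 - 1) (u2 - 1) _ _ _ _ _ hw qn); field.
have [M [hO hr]] := @orth_fix H HH.
exists M; split => //.
rewrite !hr !mxE /=.
by split; [|split]; rewrite /q; field; rewrite /q in qn.
Qed.

End Frame.



Local Close Scope classical_set_scope.

Lemma sq3_eq0 (R : realType) (a b c : R) : a ^+ 2 + b ^+ 2 + c ^+ 2 = 0 -> a = 0 /\ b = 0 /\ c = 0.
Proof.
move=> h; have := sqr_ge0 a; have := sqr_ge0 b; have := sqr_ge0 c => h1 h2 h3.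
split; [|split]; apply/eqP; rewrite -sqrf_eq0; apply/eqP; lra.
Qed.

Lemma polar (R : realType) (a b c : R) : Nc R a b c < 1 ->
  exists c0 u0 u1 u2 : R, (0 <= c0 < 1) /\ u0 ^+ 2 + u1 ^+ 2 + u2 ^+ 2 = 1 /\
    a = c0 * u0 /\ b = c0 * u1 /\ c = c0 * u2.
Proof.
rewrite /Nc => hN.
have [N0|Nn] := eqVneq (a ^+ 2 + b ^+ 2 + c ^+ 2) 0.
  have [-> [-> ->]] := @sq3_eq0 R _ _ _ N0.
  exists 0, 0, 0, 1; rewrite !mul0r; split; first by rewrite lexx ltr01.
  by split => //; rewrite expr0n expr1n /= !add0r.
set N := a ^+ 2 + b ^+ 2 + c ^+ 2 in hN Nn *.
have N0 : 0 <= N by rewrite /N !addr_ge0 ?sqr_ge0.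
have Np : 0 < N by rewrite lt_def Nn N0.
set c0 := Num.sqrt N.
have c0p : 0 < c0 by rewrite sqrtr_gt0.
have c02 : c0 ^+ 2 = N by rewrite sqr_sqrtr.
have c0n : c0 != 0 by rewrite lt0r_neq0.
exists c0, (a / c0), (b / c0), (c / c0); split.
  rewrite ltW //=; rewrite -(ltr_pXn2r (_ : (0 < 2)%N)) ?nnegrE ?ltW //.
  by rewrite c02 expr1n.
split; last by split; [|split]; field.
rewrite !expr_div_n -!mulrDl -/N -c02; by rewrite divff // expf_neq0.
Qed.

Theorem lemma4 (R : realType) (l n : nat) (hl : (0 < l)%N)
  (v : 'I_l -> 'cV[R]_3) (m : 'I_l -> nat)
  (hunit : forall i, unit_vec (v i))
  (hdist : injective v)
  (hsort : forall i j : 'I_l, (i <= j)%N -> (m j <= m i)%N)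
  (hsum : (\sum_(i < l) m i)%N = n)
  (hn : (3 <= n)%N)
  (hm1 : (m (Ordinal hl) < \sum_(i < l | i != Ordinal hl) m i)%N) :
  exists (O : 'M[R]_3) (alpha : R),
    is_SO3 O /\ 0 <= alpha < 1 /\
    exists theta phi : 'I_l -> R,
      (forall i, sph_coords (O *m v i) (theta i) (phi i)) /\
      \sum_(i < l) (m i)%:R *: f_alpha alpha (theta i) (phi i) = 0.
Proof.
set i0 := Ordinal hl.
pose X i := v i o0 0; pose Y i := v i o1 0; pose Z i := v i o2 0.
have hu : forall i, X i ^+ 2 + Y i ^+ 2 + Z i ^+ 2 = 1.
  by move=> i; have := hunit i; rewrite /unit_vec sum3.
have hd : forall i j, i != j -> 0 < (X i - X j) ^+ 2 + (Y i - Y j) ^+ 2 + (Z i - Z j) ^+ 2.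
  move=> i j hij; rewrite lt_def; apply/andP; split; last by rewrite !addr_ge0 ?sqr_ge0.
  apply/negP => /eqP h0.
  have [e0 [e1 e2]] := @sq3_eq0 R _ _ _ h0.
  move/negP: hij; apply; apply/eqP; apply: hdist; apply/matrixP => k jj.
  rewrite (ord1 jj); move: k; apply: ord3P; apply/eqP; rewrite -subr_eq0; apply/eqP.
  - exact: e0.
  - exact: e1.
  - exact: e2.
have hmax : forall i, (2 * m i < n)%N.
  move=> i; have hi : (m i <= m i0)%N by apply: hsort.
  have : n = (m i0 + \sum_(i < l | i != i0) m i)%N by rewrite -hsum (bigD1 i0).
  move: hm1; rewrite -/i0; lia.
have [a [b [c [hN hcr]]]] := @crit R l X Y Z m n i0 hu hd hsum hmax.
have [c0 [u0 [u1 [u2 [hc0 [huu [ea [eb ec]]]]]]]] := @polar R _ _ _ hN.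
have [Om [hSO [hO0 [hO1 hO2]]]] := @frame R _ _ _ huu.
have hOO : Om *m Om^T = 1%:M by apply: mulmx1C; case: hSO.
have rowr : forall k k', Om k o0 * Om k' o0 + Om k o1 * Om k' o1 + Om k o2 * Om k' o2 = (k == k')%:R.
  move=> k k'; have := congr1 (fun M : 'M[R]_3 => M k k') hOO.
  by rewrite !mxE sum3 !mxE.
have h02 : Om o0 o0 * u0 + Om o0 o1 * u1 + Om o0 o2 * u2 = 0.
  by rewrite -hO0 -hO1 -hO2 rowr.
have h12 : Om o1 o0 * u0 + Om o1 o1 * u1 + Om o1 o2 * u2 = 0.
  by rewrite -hO0 -hO1 -hO2 rowr.
pose xs i := (Om *m v i) o0 0; pose ys i := (Om *m v i) o1 0; pose zs i := (Om *m v i) o2 0.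
have hw : forall i k, (Om *m v i) k 0 = Om k o0 * X i + Om k o1 * Y i + Om k o2 * Z i.
  by move=> i k; rewrite mxE sum3.
have hzs : forall i, zs i = u0 * X i + u1 * Y i + u2 * Z i.
  by move=> i; rewrite /zs hw hO0 hO1 hO2.
have hwu : forall i, xs i ^+ 2 + ys i ^+ 2 + zs i ^+ 2 = 1.
  move=> i.
  have hOTO : Om^T *m Om = 1%:M by case: hSO.
  have e : (Om *m v i)^T *m (Om *m v i) = (v i)^T *m v i.
    by rewrite trmx_mul -mulmxA (mulmxA Om^T) hOTO mul1mx.
  have := congr1 (fun M : 'M[R]_1 => M 0 0) e.
  rewrite !mxE !sum3 !mxE -!expr2 /xs /ys /zs !mxE => ->.
  by have := hu i; rewrite /X /Y /Z.
have hex : forall i, exists q : R * R, (0 <= q.1 <= pi) /\ (0 <= q.2 <= 2 * pi) /\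
    sin q.1 * cos q.2 = xs i /\ sin q.1 * sin q.2 = ys i /\ cos q.1 = zs i.
  move=> i; have [th [ph hh]] := @sph_exists R _ _ _ (hwu i).
  by exists (th, ph).
have [tp htp] := choice hex.
have [c00 c01] : 0 <= c0 /\ c0 < 1 by move/andP: hc0.
exists Om, (2 * c0 / (1 + c0)); split; first exact: hSO.
split.
  apply/andP; split; first by apply: divr_ge0; lra.
  by rewrite ltr_pdivrMr; lra.
exists (fun i => (tp i).1), (fun i => (tp i).2); split.
  move=> i; have [hth [hph [e1 [e2 e3]]]] := htp i.
  split => //; split => //.
  apply/matrixP => k j; rewrite (ord1 j) /sph [in RHS]mxE.
  by move: k; apply: ord3P => /=; [rewrite e1 | rewrite e2 | rewrite e3].
pose E i := 1 + c0 ^+ 2 - 2 * c0 * zs i.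
have hDc : forall i, Dc R l X Y Z i a b c = E i.
  move=> i; rewrite /Dc ea eb ec.
  transitivity ((X i ^+ 2 + Y i ^+ 2 + Z i ^+ 2) - 2 * c0 * (u0 * X i + u1 * Y i + u2 * Z i)
     + c0 ^+ 2 * (u0 ^+ 2 + u1 ^+ 2 + u2 ^+ 2)); first ring.
  by rewrite hu huu -hzs /E; ring.
have hE : forall i, 0 < E i.
  by move=> i; rewrite -hDc; apply: (@Dc_pos R l X Y Z hu i a b c hN).
have hNc : Nc R a b c = c0 ^+ 2.
  rewrite /Nc ea eb ec; transitivity (c0 ^+ 2 * (u0 ^+ 2 + u1 ^+ 2 + u2 ^+ 2)); first ring.
  by rewrite huu mulr1.
have S0 : \sum_(i < l) (m i)%:R * xs i / E i = 0.
  have := hcr (Om o0 o0) (Om o0 o1) (Om o0 o2).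
  have -> : a * Om o0 o0 + b * Om o0 o1 + c * Om o0 o2 = 0.
    rewrite ea eb ec; transitivity (c0 * (Om o0 o0 * u0 + Om o0 o1 * u1 + Om o0 o2 * u2)); first ring.
    by rewrite h02 mulr0.
  rewrite mulr0 mul0r => h; apply: (eq_trans _ h); apply: eq_bigr => i _; rewrite hDc; congr (_ * _ / _).
  rewrite ea eb ec; transitivity ((Om o0 o0 * X i + Om o0 o1 * Y i + Om o0 o2 * Z i)
     - c0 * (Om o0 o0 * u0 + Om o0 o1 * u1 + Om o0 o2 * u2)); first by rewrite h02 mulr0 subr0 /xs hw.
  ring.
have S1 : \sum_(i < l) (m i)%:R * ys i / E i = 0.
  have := hcr (Om o1 o0) (Om o1 o1) (Om o1 o2).
  have -> : a * Om o1 o0 + b * Om o1 o1 + c * Om o1 o2 = 0.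
    rewrite ea eb ec; transitivity (c0 * (Om o1 o0 * u0 + Om o1 o1 * u1 + Om o1 o2 * u2)); first ring.
    by rewrite h12 mulr0.
  rewrite mulr0 mul0r => h; apply: (eq_trans _ h); apply: eq_bigr => i _; rewrite hDc; congr (_ * _ / _).
  rewrite ea eb ec; transitivity ((Om o1 o0 * X i + Om o1 o1 * Y i + Om o1 o2 * Z i)
     - c0 * (Om o1 o0 * u0 + Om o1 o1 * u1 + Om o1 o2 * u2)); first by rewrite h12 mulr0 subr0 /ys hw.
  ring.
have S2 : \sum_(i < l) (m i)%:R * (zs i - c0) / E i = n%:R * c0 / (1 - c0 ^+ 2).
  have := hcr u0 u1 u2.
  have -> : a * u0 + b * u1 + c * u2 = c0.
    rewrite ea eb ec; transitivity (c0 * (u0 ^+ 2 + u1 ^+ 2 + u2 ^+ 2)); first ring.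
    by rewrite huu mulr1.
  rewrite hNc => h; apply: (eq_trans _ h); apply: eq_bigr => i _; rewrite hDc; congr (_ * _ / _).
  rewrite ea eb ec hzs; transitivity ((u0 * X i + u1 * Y i + u2 * Z i)
     - c0 * (u0 ^+ 2 + u1 ^+ 2 + u2 ^+ 2)); first by rewrite huu mulr1.
  ring.
have hff : forall i,
   sin (f_theta (2 * c0 / (1 + c0)) (tp i).1) = (1 - c0 ^+ 2) * sin (tp i).1 / E i /\
   cos (f_theta (2 * c0 / (1 + c0)) (tp i).1) = ((1 + c0 ^+ 2) * zs i - 2 * c0) / E i.
  move=> i; have [hth [_ [_ [_ e3]]]] := htp i.
  have := @f_formula R c0 (tp i).1 hc0 hth; rewrite /= e3 => -[f1 f2].
  by split; [exact: f1 | exact: f2].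
apply/matrixP => k j; rewrite (ord1 j) summxE [in RHS]mxE.
under eq_bigr do rewrite mxE /f_alpha /sph mxE.
move: k; apply: ord3P => /=.
- transitivity ((1 - c0 ^+ 2) * \sum_(i < l) (m i)%:R * xs i / E i); last by rewrite S0 mulr0.
  rewrite mulr_sumr; apply: eq_bigr => i _.
  have [_ [_ [e1 _]]] := htp i; have [f1 _] := hff i.
  by rewrite f1 -e1; ring.
- transitivity ((1 - c0 ^+ 2) * \sum_(i < l) (m i)%:R * ys i / E i); last by rewrite S1 mulr0.
  rewrite mulr_sumr; apply: eq_bigr => i _.
  have [_ [_ [_ [e2 _]]]] := htp i; have [f1 _] := hff i.
  by rewrite f1 -e2; ring.
- transitivity (\sum_(i < l) ((1 - c0 ^+ 2) * ((m i)%:R * (zs i - c0) / E i) - c0 * (m i)%:R)).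
    apply: eq_bigr => i _; have [_ f2] := hff i.
    have En : E i != 0 by rewrite lt0r_neq0.
    rewrite f2 /E; field.
    by rewrite /E in En.
  rewrite sumrB -mulr_sumr -mulr_sumr S2 -natr_sum hsum.
  have : 1 - c0 ^+ 2 != 0 by rewrite lt0r_neq0 //; nra.
  move=> hc; field.
  exact: hc.
Qed.
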